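(* For the one-dimensional Model I with parameter $\delta$, the expected number $\mathbb{E}[\tau]$ of consecutive traversals of the first edge satisfies $\mathbb{E}[\tau]\to\infty$ as $\delta\to0^+$, and more precisely $\mathbb{E}[\tau]$ is of order $|\log\delta|$: there exist constants $0<c\le C<\infty$ with $c|\log\delta|\le\mathbb{E}[\tau]\le C|\log\delta|$ for all sufficiently small $\delta>0$.
   Context: Model I on $\mathbb{Z}$ with parameter $\delta>0$: $S_0=0$, $S_1=\pm1$ with probability $1/2$ each. For $n\ge1$ let $e_n=\{S_{n-1},S_n\}$ and $m_n=\max\{k\ge1: e_{n-l+1}=e_n \text{ for all } 1\le l\le k\}$. Conditionally on $\sigma(S_0,\dots,S_n)$, the walk recrosses $e_n$ (i.e. $S_{n+1}=S_{n-1}$) with probability $\frac{1+m_n}{2+m_n}-\delta$ and otherwise crosses the other edge at $S_n$, with probability $\frac{1}{2+m_n}+\delta$. $\tau=\sup\{n\ge1: S_m\in\{0,S_1\}\ \text{for all } m\le n\}$. *)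

(* Defs.v *)
From Stdlib Require Import Reals ZArith List Bool.
Import ListNotations.
Open Scope R_scope.

(* A history is stored REVERSED: [S_n; S_(n-1); ...; S_0]. *)

(* the edges e_n, e_(n-1), ..., e_1 (most recent first) *)
Fixpoint edges (h : list Z) : list (Z * Z) :=
  match h with
  | a :: ((b :: _) as t) => (a, b) :: edges t
  | _ => []
  end.

Definition edge_eqb (e f : Z * Z) : bool :=
  let (a, b) := e in let (c, d) := f in
  ((a =? c)%Z && (b =? d)%Z) || ((a =? d)%Z && (b =? c)%Z).

Fixpoint run_len (e : Z * Z) (l : list (Z * Z)) : nat :=
  match l with
  | [] => O
  | f :: t => if edge_eqb e f then S (run_len e t) else O
  end.

(* m_n = max{k >= 1 : e_(n-l+1) = e_n for 1 <= l <= k} *)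
Definition mrun (h : list Z) : nat :=
  match edges h with
  | [] => O
  | e :: t => run_len e (e :: t)
  end.

(* conditional probability that S_(n+1) = x given the (reversed) history h *)
Definition trans (delta : R) (h : list Z) (x : Z) : R :=
  match h with
  | [] => 0
  | [s0] => if ((x =? s0 + 1)%Z || (x =? s0 - 1)%Z) then 1/2 else 0
  | sn :: sn1 :: _ =>
      let m := INR (mrun h) in
      if (x =? sn1)%Z then (1 + m) / (2 + m) - delta
      else if (x =? 2 * sn - sn1)%Z then 1 / (2 + m) + delta
      else 0
  end.

Fixpoint pathprob (delta : R) (h : list Z) : R :=
  match h with
  | [] => 0
  | [s0] => if (s0 =? 0)%Z then 1 else 0
  | x :: t => pathprob delta t * trans delta t x
  end.

Fixpoint paths (n : nat) : list (list Z) :=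
  match n with
  | O => [[0%Z]]
  | S k => flat_map (fun h => [((hd 0%Z h + 1)%Z :: h); ((hd 0%Z h - 1)%Z :: h)]) (paths k)
  end.

Definition sumR (l : list R) : R := fold_right Rplus 0 l.

(* S_k in {0, S_1}, for the chronological path l = [S_0; S_1; ...] *)
Definition on_first (l : list Z) (k : nat) : bool :=
  let x := nth k l 0%Z in (x =? 0)%Z || (x =? nth 1 l 0%Z)%Z.

Definition stays_upto (l : list Z) (n : nat) : bool :=
  forallb (on_first l) (seq 0 (S n)).

(* P(tau >= n) = P(S_m in {0,S_1} for all m <= n) *)
Definition P_tau_ge (delta : R) (n : nat) : R :=
  sumR (map (fun h => if stays_upto (rev h) n then pathprob delta h else 0) (paths n)).

(* P(tau = n) = P(S_m in {0,S_1} for m <= n, S_(n+1) not in {0,S_1}) *)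
Definition P_tau_eq (delta : R) (n : nat) : R :=
  sumR (map (fun h => if stays_upto (rev h) n && negb (on_first (rev h) (S n))
                      then pathprob delta h else 0) (paths (S n))).

(* E[tau] = E is finite and equals E: tau < infinity a.s. and
   sum_n n P(tau = n) converges to E *)
Definition ExpectedTau (delta : R) (E : R) : Prop :=
  Un_cv (fun n => P_tau_ge delta n) 0 /\
  infinite_sum (fun n => INR n * P_tau_eq delta n) E.

(* Main.v *)
Require Import Defs.
From Stdlib Require Import Reals Lra Lia ZArith List Bool.
Import ListNotations.
Open Scope R_scope.

Fixpoint altlist (s : Z) (n : nat) : list Z :=
  match n with
  | O => [0%Z]
  | S k => (if Nat.even (S k) then 0%Z else s) :: altlist s k
  end.

Lemma paths_len n h : In h (paths n) -> length h = S n.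
Proof.
  revert h; induction n; simpl; intros h H.
  - destruct H as [<-|[]]; reflexivity.
  - apply in_flat_map in H. destruct H as [h' [H1 H2]].
    simpl in H2. destruct H2 as [<-|[<-|[]]]; simpl; rewrite IHn; auto.
Qed.

Lemma paths_S n h : In h (paths (S n)) ->
  exists h', In h' (paths n) /\ (h = (hd 0%Z h' + 1)%Z :: h' \/ h = (hd 0%Z h' - 1)%Z :: h').
Proof.
  simpl; intro H. apply in_flat_map in H. destruct H as [h' [H1 H2]].
  exists h'; split; auto. simpl in H2. destruct H2 as [<-|[<-|[]]]; auto.
Qed.

Lemma stays_S l n : stays_upto l (S n) = stays_upto l n && on_first l (S n).
Proof.
  unfold stays_upto. rewrite (seq_S (S n) 0). rewrite forallb_app. simpl.
  rewrite andb_true_r. reflexivity.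
Qed.

Lemma on_first_app l x k : (k < length l)%nat -> (1 < length l)%nat ->
  on_first (l ++ [x]) k = on_first l k.
Proof.
  intros H1 H2. unfold on_first. rewrite !app_nth1 by lia. reflexivity.
Qed.

Lemma stays_app l x n : (n < length l)%nat -> (1 < length l)%nat ->
  stays_upto (l ++ [x]) n = stays_upto l n.
Proof.
  intros H1 H2. induction n.
  - unfold stays_upto; simpl. rewrite on_first_app by lia. reflexivity.
  - rewrite !stays_S. rewrite IHn by lia. rewrite on_first_app by lia. reflexivity.
Qed.

Lemma stays_ext h x n : length h = S n -> (1 <= n)%nat ->
  stays_upto (rev (x :: h)) n = stays_upto (rev h) n.
Proof.
  intros H1 H2. simpl. apply stays_app; rewrite length_rev; lia.
Qed.

Lemma on_first_ext h x n : length h = S n -> (1 <= n)%nat ->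
  on_first (rev (x :: h)) (S n) = ((x =? 0)%Z || (x =? nth 1 (rev h) 0%Z)%Z).
Proof.
  intros H1 H2. simpl. unfold on_first.
  rewrite app_nth2 by (rewrite length_rev; lia).
  rewrite length_rev, H1, Nat.sub_diag. simpl.
  rewrite app_nth1 by (rewrite ?length_rev; lia). reflexivity.
Qed.

Lemma stays_ext_S h x n : length h = S n -> (1 <= n)%nat ->
  stays_upto (rev (x :: h)) (S n) =
  stays_upto (rev h) n && ((x =? 0)%Z || (x =? nth 1 (rev h) 0%Z)%Z).
Proof.
  intros H1 H2. rewrite stays_S, stays_ext, on_first_ext by auto. reflexivity.
Qed.

Lemma altlist_len s n : length (altlist s n) = S n.
Proof. induction n; simpl; auto. Qed.

Lemma nth_rev_cons {A} (x : A) l k d : (k < length l)%nat ->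
  nth k (rev (x :: l)) d = nth k (rev l) d.
Proof. intro H. simpl. rewrite app_nth1; auto. rewrite length_rev; auto. Qed.

Lemma altlist_nth1 s n : (1 <= n)%nat -> nth 1 (rev (altlist s n)) 0%Z = s.
Proof.
  induction n; intro H. lia.
  destruct n. reflexivity.
  change (altlist s (S (S n))) with ((if Nat.even (S (S n)) then 0%Z else s) :: altlist s (S n)).
  rewrite nth_rev_cons by (rewrite altlist_len; lia).
  apply IHn; lia.
Qed.

Lemma altlist_shape s n : (1 <= n)%nat -> exists t,
  altlist s n = (if Nat.even n then 0%Z else s) :: (if Nat.even n then s else 0%Z) :: t.
Proof.
  intro H. destruct n. lia. exists (tl (altlist s n)).
  change (altlist s (S n)) with ((if Nat.even (S n) then 0%Z else s) :: altlist s n).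
  f_equal. destruct n. reflexivity.
  change (altlist s (S n)) with ((if Nat.even (S n) then 0%Z else s) :: altlist s n).
  simpl tl. f_equal.
  replace (Nat.even (S (S n))) with (Nat.even n) by reflexivity.
  rewrite Nat.even_succ, <- Nat.negb_even. destruct (Nat.even n); reflexivity.
Qed.

Lemma struct n h : In h (paths n) -> (1 <= n)%nat -> stays_upto (rev h) n = true ->
  exists s, (s = 1%Z \/ s = (-1)%Z) /\ h = altlist s n.
Proof.
  revert h. induction n; intros h Hin Hn Hs. lia.
  destruct (paths_S _ _ Hin) as [h' [Hin' Hx]].
  destruct n.
  - simpl in Hin'. destruct Hin' as [<-|[]]. simpl in Hx.
    destruct Hx as [->| ->]; [exists 1%Z | exists (-1)%Z]; split; auto.
  - assert (Hl := paths_len _ _ Hin').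
    assert (exists x, h = x :: h') as [x Hxe] by (destruct Hx as [->| ->]; eauto).
    subst h. rewrite stays_ext_S in Hs by (auto; lia).
    apply andb_prop in Hs. destruct Hs as [Hs1 Hs2].
    destruct (IHn h' Hin' ltac:(lia) Hs1) as [s [Hs Heq]]. subst h'.
    exists s. split; auto.
    rewrite altlist_nth1 in Hs2 by lia.
    destruct (altlist_shape s (S n) ltac:(lia)) as [t Ht].
    change (altlist s (S (S n))) with ((if Nat.even (S (S n)) then 0%Z else s) :: altlist s (S n)).
    assert (E1: Nat.even (S n) = negb (Nat.even n)) by (rewrite Nat.even_succ, Nat.negb_even; auto).
    rewrite E1 in Ht. rewrite Ht in Hx. cbn [hd] in Hx.
    assert (E: Nat.even (S (S n)) = Nat.even n) by reflexivity. rewrite E.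
    f_equal.
    destruct (Nat.even n); cbn [negb] in Hx;
    destruct Hs as [-> | ->];
    destruct Hx as [Hx|Hx]; injection Hx as ->; simpl in Hs2; try discriminate; reflexivity.
Qed.

Lemma edges_cons2 a b t : edges (a :: b :: t) = (a, b) :: edges (b :: t).
Proof. reflexivity. Qed.

Lemma altlist_edges s n : Forall (fun f => f = (0%Z, s) \/ f = (s, 0%Z)) (edges (altlist s n))
  /\ length (edges (altlist s n)) = n.
Proof.
  induction n.
  - simpl. auto.
  - destruct n. { simpl. split; auto. }
    destruct (altlist_shape s (S (S n)) ltac:(lia)) as [t Ht].
    assert (Hk : altlist s (S n) = (if Nat.even (S (S n)) then s else 0%Z) :: t).
    { change (altlist s (S (S n))) with ((if Nat.even (S (S n)) then 0%Z else s) :: altlist s (S n)) in Ht.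
      apply (f_equal (@tl Z)) in Ht; exact Ht. }
    rewrite Ht, edges_cons2, <- Hk. destruct IHn as [IH1 IH2]. split.
    + constructor; auto. destruct (Nat.even (S (S n))); auto.
    + transitivity (S (length (edges (altlist s (S n))))); [reflexivity|]. rewrite IH2. reflexivity.
Qed.

Lemma run_len_all e l : (forall f, In f l -> edge_eqb e f = true) -> run_len e l = length l.
Proof.
  induction l; simpl; intros H; auto. rewrite H by auto. rewrite IHl; auto.
Qed.

Lemma mrun_alt s n : (s = 1%Z \/ s = (-1)%Z) -> mrun (altlist s n) = n.
Proof.
  intro Hs. destruct (altlist_edges s n) as [H1 H2]. unfold mrun.
  destruct (edges (altlist s n)) as [|e t] eqn:E. simpl in H2. auto.
  rewrite run_len_all. auto.
  rewrite Forall_forall in H1. intros f Hf.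
  assert (He := H1 e (or_introl eq_refl)). assert (Hf' := H1 f Hf).
  destruct Hs as [-> | ->]; destruct He as [-> | ->]; destruct Hf' as [-> | ->]; reflexivity.
Qed.

Lemma pathprob_cons2 d x a b t : pathprob d (x :: a :: b :: t) = pathprob d (a :: b :: t) * trans d (a :: b :: t) x.
Proof. reflexivity. Qed.

Lemma trans_cons2 d x a b t : trans d (a :: b :: t) x =
  let m := INR (mrun (a :: b :: t)) in
  if (x =? b)%Z then (1 + m) / (2 + m) - d
  else if (x =? 2 * a - b)%Z then 1 / (2 + m) + d else 0.
Proof. reflexivity. Qed.

Definition a_ (d : R) (n : nat) := (1 + INR n) / (2 + INR n) - d.
Definition b_ (d : R) (n : nat) := 1 / (2 + INR n) + d.
Definition Q (d : R) (n : nat) (h : list Z) := if stays_upto (rev h) n then pathprob d h else 0.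

Lemma step_ge d n h : In h (paths n) -> (1 <= n)%nat ->
  (if stays_upto (rev ((hd 0%Z h + 1)%Z :: h)) (S n) then pathprob d ((hd 0%Z h + 1)%Z :: h) else 0) +
  (if stays_upto (rev ((hd 0%Z h - 1)%Z :: h)) (S n) then pathprob d ((hd 0%Z h - 1)%Z :: h) else 0)
  = Q d n h * a_ d n.
Proof.
  intros Hin Hn. assert (Hl := paths_len _ _ Hin).
  rewrite !stays_ext_S by auto. unfold Q.
  destruct (stays_upto (rev h) n) eqn:Hs; cbn [andb].
  2: ring.
  destruct (struct n h Hin Hn Hs) as [s [Hs' ->]].
  rewrite altlist_nth1 by auto.
  assert (Hm := mrun_alt s n Hs').
  destruct (altlist_shape s n Hn) as [t Ht]. rewrite Ht in Hm |- *.
  rewrite !pathprob_cons2, !trans_cons2, Hm. unfold a_.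
  set (P := pathprob d _). cbn [hd].
  destruct (Nat.even n); destruct Hs' as [-> | ->]; simpl; ring.
Qed.

Lemma step_eq d n h : In h (paths n) -> (1 <= n)%nat ->
  (if stays_upto (rev ((hd 0%Z h + 1)%Z :: h)) n && negb (on_first (rev ((hd 0%Z h + 1)%Z :: h)) (S n)) then pathprob d ((hd 0%Z h + 1)%Z :: h) else 0) +
  (if stays_upto (rev ((hd 0%Z h - 1)%Z :: h)) n && negb (on_first (rev ((hd 0%Z h - 1)%Z :: h)) (S n)) then pathprob d ((hd 0%Z h - 1)%Z :: h) else 0)
  = Q d n h * b_ d n.
Proof.
  intros Hin Hn. assert (Hl := paths_len _ _ Hin).
  rewrite !stays_ext, !on_first_ext by auto. unfold Q.
  destruct (stays_upto (rev h) n) eqn:Hs; cbn [andb].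
  2: ring.
  destruct (struct n h Hin Hn Hs) as [s [Hs' ->]].
  rewrite altlist_nth1 by auto.
  assert (Hm := mrun_alt s n Hs').
  destruct (altlist_shape s n Hn) as [t Ht]. rewrite Ht in Hm |- *.
  rewrite !pathprob_cons2, !trans_cons2, Hm. unfold b_.
  set (P := pathprob d _). cbn [hd].
  destruct (Nat.even n); destruct Hs' as [-> | ->]; simpl; ring.
Qed.

Lemma sumR_flat {A} (F : A -> R) (f1 f2 : A -> A) L :
  sumR (map F (flat_map (fun h => [f1 h; f2 h]) L)) = sumR (map (fun h => F (f1 h) + F (f2 h)) L).
Proof. induction L as [|x L IHL]; simpl; auto. rewrite IHL. ring. Qed.

Lemma sumR_ext_in {A} (F G : A -> R) L : (forall h, In h L -> F h = G h) ->
  sumR (map F L) = sumR (map G L).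
Proof. induction L as [|x L IHL]; simpl; intros H; auto. rewrite H, IHL; auto. Qed.

Lemma sumR_scal {A} (F : A -> R) c L : sumR (map (fun h => F h * c) L) = sumR (map F L) * c.
Proof. induction L as [|x L IHL]; simpl; [ring|]. rewrite IHL. ring. Qed.

Lemma Pge_S d n : (1 <= n)%nat -> P_tau_ge d (S n) = P_tau_ge d n * a_ d n.
Proof.
  intro Hn. unfold P_tau_ge. change (paths (S n)) with
    (flat_map (fun h => [((hd 0%Z h + 1)%Z :: h); ((hd 0%Z h - 1)%Z :: h)]) (paths n)).
  rewrite sumR_flat. rewrite (sumR_ext_in _ (fun h => Q d n h * a_ d n)).
  - rewrite sumR_scal. reflexivity.
  - intros h Hh. apply step_ge; auto.
Qed.

Lemma Peq_S d n : (1 <= n)%nat -> P_tau_eq d n = P_tau_ge d n * b_ d n.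
Proof.
  intro Hn. unfold P_tau_eq. change (paths (S n)) with
    (flat_map (fun h => [((hd 0%Z h + 1)%Z :: h); ((hd 0%Z h - 1)%Z :: h)]) (paths n)).
  rewrite sumR_flat. rewrite (sumR_ext_in _ (fun h => Q d n h * b_ d n)).
  - rewrite sumR_scal. reflexivity.
  - intros h Hh. apply step_eq; auto.
Qed.

Lemma Pge_0 d : P_tau_ge d 0 = 1.
Proof. unfold P_tau_ge. simpl. ring. Qed.

Lemma Pge_1 d : P_tau_ge d 1 = 1.
Proof. unfold P_tau_ge. simpl. field. Qed.

Lemma Peq_0 d : P_tau_eq d 0 = 0.
Proof. unfold P_tau_eq. simpl. ring. Qed.

Definition H d k := P_tau_ge d (S k).

Lemma H0 d : H d 0 = 1.
Proof. apply Pge_1. Qed.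

Lemma HS d k : H d (S k) = H d k * ((2 + INR k) / (3 + INR k) - d).
Proof.
  unfold H. rewrite Pge_S by lia. unfold a_. rewrite S_INR.
  replace (1 + (INR k + 1)) with (2 + INR k) by ring.
  replace (2 + (INR k + 1)) with (3 + INR k) by ring. reflexivity.
Qed.

Lemma Peq_H d k : P_tau_eq d (S k) = H d k - H d (S k).
Proof.
  rewrite Peq_S by lia. rewrite HS. unfold H, b_. rewrite S_INR.
  assert (0 <= INR k) by apply pos_INR. field. lra.
Qed.

Lemma rk_bounds k : 2/3 <= (2 + INR k) / (3 + INR k) <= 1.
Proof.
  assert (Hk: 0 <= INR k) by apply pos_INR.
  split; apply Rmult_le_reg_r with (3 + INR k); try lra; field_simplify; lra.
Qed.

Lemma rk_rel k : 2 / (INR (S k) + 2) = (2 + INR k) / (3 + INR k) * (2 / (INR k + 2)).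
Proof. rewrite S_INR. assert (0 <= INR k) by apply pos_INR. field; lra. Qed.

Lemma H_bounds d k : 0 < d <= 1/64 ->
  0 <= H d k /\ H d k <= 2 / (INR k + 2) * (1 - d) ^ k /\
  2 / (INR k + 2) * (1 - 2*d) ^ k <= H d k.
Proof.
  intro Hd. induction k.
  - rewrite H0. simpl. lra.
  - destruct IHk as [I1 [I2 I3]]. rewrite HS, rk_rel.
    assert (R := rk_bounds k). set (r := (2 + INR k) / (3 + INR k)) in *.
    assert (Hk: 0 <= INR k) by apply pos_INR.
    assert (P1: 0 <= (1 - d) ^ k) by (apply pow_le; lra).
    assert (P2: 0 <= (1 - 2*d) ^ k) by (apply pow_le; lra).
    assert (X: 0 < 2 / (INR k + 2)) by (apply Rdiv_lt_0_compat; lra).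
    set (X1 := 2 / (INR k + 2)) in *. simpl pow.
    set (q1 := (1 - d) ^ k) in *. set (q2 := (1 - 2*d) ^ k) in *.
    assert (A0: 0 <= r - d) by lra.
    assert (A1: r - d <= r * (1 - d)) by nra.
    assert (A2: r * (1 - 2*d) <= r - d) by nra.
    split; [|split].
    + apply Rmult_le_pos; lra.
    + apply Rle_trans with (X1 * q1 * (r - d)). apply Rmult_le_compat_r; lra.
      assert (0 <= X1 * q1) by (apply Rmult_le_pos; lra).
      apply Rle_trans with (X1 * q1 * (r * (1 - d))). apply Rmult_le_compat_l; lra.
      right; ring.
    + apply Rle_trans with (X1 * q2 * (r - d)).
      assert (0 <= X1 * q2) by (apply Rmult_le_pos; lra).
      apply Rle_trans with (X1 * q2 * (r * (1 - 2 * d))). right; ring.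
      apply Rmult_le_compat_l; lra.
      apply Rmult_le_compat_r; lra.
Qed.

Lemma ln_le_sub1 y : 0 < y -> ln y <= y - 1.
Proof. intro Hy. assert (E := exp_ineq1_le (ln y)). rewrite exp_ln in E; lra. Qed.

Lemma ln_le_mono x y : 0 < x -> x <= y -> ln x <= ln y.
Proof. intros H1 [H2|H2]. left; apply ln_increasing; auto. subst; lra. Qed.

Lemma ln_div x y : 0 < x -> 0 < y -> ln (x / y) = ln x - ln y.
Proof. intros. unfold Rdiv. rewrite ln_mult, ln_Rinv; try lra. apply Rinv_0_lt_compat; auto. Qed.

Lemma harm_up y : 0 < y -> 1 / (y + 1) <= ln (y + 1) - ln y.
Proof.
  intro Hy. assert (E := ln_le_sub1 (y / (y + 1)) ltac:(apply Rdiv_lt_0_compat; lra)).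
  rewrite ln_div in E by lra.
  assert (y / (y + 1) - 1 = - (1 / (y + 1))) by (field; lra). lra.
Qed.

Lemma harm_low y : 0 < y -> ln (y + 1) - ln y <= 1 / y.
Proof.
  intro Hy. assert (E := ln_le_sub1 ((y + 1) / y) ltac:(apply Rdiv_lt_0_compat; lra)).
  rewrite ln_div in E by lra.
  assert ((y + 1) / y - 1 = 1 / y) by (field; lra). lra.
Qed.

Lemma bernoulli x n : 0 <= x <= 1 -> 1 - INR n * x <= (1 - x) ^ n.
Proof.
  intro Hx. induction n. simpl; lra.
  rewrite S_INR. simpl pow. assert (0 <= INR n) by apply pos_INR.
  assert (0 <= (1 - x) ^ n) by (apply pow_le; lra). nra.
Qed.

Definition SH d n := sum_f_R0 (H d) n.

Lemma SH_S d n : SH d (S n) = SH d n + H d (S n).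
Proof. reflexivity. Qed.

Lemma H_pos d k : 0 < d <= 1/64 -> 0 <= H d k.
Proof. intro Hd. apply (H_bounds d k Hd). Qed.

Lemma SH_growing d : 0 < d <= 1/64 -> Un_growing (SH d).
Proof. intros Hd n. rewrite SH_S. assert (Hp := H_pos d (S n) Hd). lra. Qed.

Lemma pow_le1 x k : 0 <= x <= 1 -> 0 <= x ^ k <= 1.
Proof. intro. split. apply pow_le; lra. rewrite <- (pow1 k). apply pow_incr; lra. Qed.

Lemma H_le_harm d k : 0 < d <= 1/64 -> H d k <= 2 / (INR k + 2).
Proof.
  intro Hd. destruct (H_bounds d k Hd) as [_ [U _]].
  assert (P := pow_le1 (1 - d) k ltac:(lra)).
  assert (0 < 2 / (INR k + 2)) by (apply Rdiv_lt_0_compat; [lra| assert (0 <= INR k) by apply pos_INR; lra]).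
  nra.
Qed.

Lemma H_le_geom d k : 0 < d <= 1/64 -> H d k <= (1 - d) ^ k.
Proof.
  intro Hd. destruct (H_bounds d k Hd) as [_ [U _]].
  assert (P := pow_le1 (1 - d) k ltac:(lra)).
  assert (0 <= INR k) by apply pos_INR.
  assert (0 < 2 / (INR k + 2) <= 1).
  { split. apply Rdiv_lt_0_compat; lra.
    apply Rmult_le_reg_r with (INR k + 2); [lra|]. field_simplify; lra. }
  nra.
Qed.

Lemma H_ge_harm d k : 0 < d <= 1/64 -> 4 * d * INR k <= 1 -> 1 / (INR k + 2) <= H d k.
Proof.
  intros Hd Hk. destruct (H_bounds d k Hd) as [_ [_ L]].
  assert (B := bernoulli (2 * d) k ltac:(lra)).
  assert (0 <= INR k) by apply pos_INR.
  assert (0 < 2 / (INR k + 2)) by (apply Rdiv_lt_0_compat; lra).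
  assert (1 / (INR k + 2) = 2 / (INR k + 2) * (1/2)) by (field; lra).
  nra.
Qed.

Lemma SH_up d n : 0 < d <= 1/64 -> SH d n <= 2 * ln (INR n + 2).
Proof.
  intro Hd. induction n.
  - unfold SH; simpl sum_f_R0. rewrite H0. assert (E := ln_lt_2). replace (INR 0 + 2) with 2 by (simpl; ring). lra.
  - rewrite SH_S. assert (E := H_le_harm d (S n) Hd).
    assert (0 <= INR n) by apply pos_INR.
    assert (E2 := harm_up (INR n + 2) ltac:(lra)).
    rewrite S_INR in *.
    replace (INR n + 1 + 2) with (INR n + 2 + 1) in * by ring.
    assert (2 / (INR n + 2 + 1) = 2 * (1 / (INR n + 2 + 1))) by (field; lra).
    lra.
Qed.

Lemma SH_low d K : 0 < d <= 1/64 -> 4 * d * INR K <= 1 -> ln (INR K + 3) - ln 2 <= SH d K.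
Proof.
  intro Hd. induction K; intro HK.
  - unfold SH; simpl. rewrite H0. assert (E := harm_low 2 ltac:(lra)).
    replace (0 + 3) with (2 + 1) by ring. lra.
  - rewrite SH_S. assert (E := H_ge_harm d (S K) Hd HK).
    rewrite S_INR in *. assert (0 <= INR K) by apply pos_INR.
    assert (IH := IHK ltac:(lra)).
    assert (E2 := harm_low (INR K + 3) ltac:(lra)).
    replace (INR K + 1 + 3) with (INR K + 3 + 1) by ring.
    replace (INR K + 1 + 2) with (INR K + 3) in E by ring.
    lra.
Qed.

Lemma SH_tail d K m : 0 < d <= 1/64 ->
  SH d (K + m) <= 2 * ln (INR K + 2) + (1 - d) ^ (S K) * (1 - (1 - d) ^ m) / d.
Proof.
  intro Hd. induction m.
  - rewrite Nat.add_0_r. simpl pow. replace (1 - 1 * 1) with 0 by ring.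
    replace ((1 - d) * (1 - d) ^ K * (1 - 1) / d) with 0 by (field; lra). rewrite Rplus_0_r. apply SH_up; auto.
  - rewrite Nat.add_succ_r, SH_S. assert (E := H_le_geom d (S (K + m)) Hd).
    replace ((1 - d) ^ S (K + m)) with ((1 - d) ^ S K * (1 - d) ^ m) in E
      by (rewrite <- pow_add; f_equal; lia).
    replace ((1 - d) ^ S K * (1 - (1 - d) ^ S m) / d) with
      ((1 - d) ^ S K * (1 - (1 - d) ^ m) / d + (1 - d) ^ S K * (1 - d) ^ m)
      by (simpl pow; field; lra).
    lra.
Qed.

Lemma SH_bound d K n : 0 < d <= 1/64 ->
  SH d n <= 2 * ln (INR K + 2) + (1 - d) ^ (S K) / d.
Proof.
  intro Hd. apply Rle_trans with (SH d (K + n)).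
  - apply tech9. apply SH_growing; auto. lia.
  - eapply Rle_trans. apply SH_tail; auto.
    assert (P1 := pow_le1 (1 - d) (S K) ltac:(lra)).
    assert (P2 := pow_le1 (1 - d) n ltac:(lra)).
    unfold Rdiv. apply Rplus_le_compat_l. apply Rmult_le_compat_r.
    left; apply Rinv_0_lt_compat; lra. nra.
Qed.

Lemma Un_cv_ext u v l : (forall n, u n = v n) -> Un_cv u l -> Un_cv v l.
Proof. intros E C eps He. destruct (C eps He) as [N HN]. exists N. intros n Hn. rewrite <- E. auto. Qed.

Lemma squeeze u c x : 0 <= x < 1 -> 0 <= c -> (forall n, 0 <= u n <= c * x ^ n) -> Un_cv u 0.
Proof.
  intros Hx Hc Hu eps He.
  destruct (pow_lt_1_zero x ltac:(rewrite Rabs_pos_eq; lra) (eps / (c + 1)) ltac:(apply Rdiv_lt_0_compat; lra)) as [N HN].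
  exists N. intros n Hn. unfold Rdist. rewrite Rminus_0_r.
  destruct (Hu n) as [U1 U2]. rewrite Rabs_pos_eq by lra.
  assert (A := HN n Hn). rewrite Rabs_pos_eq in A by (apply pow_le; lra).
  assert (0 <= x ^ n) by (apply pow_le; lra).
  assert (eps / (c + 1) * (c + 1) = eps) by (field; lra).
  nra.
Qed.

Lemma Pge_cv d : 0 < d <= 1/64 -> Un_cv (P_tau_ge d) 0.
Proof.
  intro Hd. apply CV_shift with 1%nat.
  apply Un_cv_ext with (H d). { intro n. unfold H. f_equal. lia. }
  apply squeeze with 1 (1 - d). lra. lra.
  intro n. split. apply H_pos; auto. rewrite Rmult_1_l. apply H_le_geom; auto.
Qed.

Definition fE d n := INR n * P_tau_eq d n.

Lemma sum_fE d N : sum_f_R0 (fE d) (S N) = SH d N - INR (S N) * H d (S N).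
Proof.
  induction N.
  - simpl sum_f_R0. unfold fE, SH. rewrite Peq_0, Peq_H. simpl sum_f_R0. simpl INR. ring.
  - change (sum_f_R0 (fE d) (S (S N))) with (sum_f_R0 (fE d) (S N) + fE d (S (S N))).
    rewrite IHN, SH_S. unfold fE. rewrite Peq_H. rewrite !S_INR. ring.
Qed.

Lemma tailterm_cv d : 0 < d <= 1/64 -> Un_cv (fun N => INR (S N) * H d (S N)) 0.
Proof.
  intro Hd. apply squeeze with (2 * (1 - d)) (1 - d). lra. lra.
  intro n. destruct (H_bounds d (S n) Hd) as [P [U _]].
  assert (0 <= INR n) by apply pos_INR. rewrite S_INR in *.
  assert (Q1 : 0 <= (1 - d) ^ n) by (apply pow_le; lra).
  simpl pow in U.
  assert (Q2 : (INR n + 1) * (2 / (INR n + 1 + 2)) <= 2).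
  { apply Rmult_le_reg_r with (INR n + 1 + 2); [lra|]. field_simplify; lra. }
  assert (Q3 : 0 <= (1 - d) * (1 - d) ^ n) by (apply Rmult_le_pos; lra).
  split. apply Rmult_le_pos; lra.
  apply Rle_trans with ((INR n + 1) * (2 / (INR n + 1 + 2) * ((1 - d) * (1 - d) ^ n))).
  apply Rmult_le_compat_l; lra.
  rewrite <- Rmult_assoc. replace (2 * (1 - d) * (1 - d) ^ n) with (2 * ((1 - d) * (1 - d) ^ n)) by ring.
  apply Rmult_le_compat_r; lra.
Qed.

Lemma E_exists d : 0 < d <= 1/64 -> { E | Un_cv (SH d) E }.
Proof.
  intro Hd. apply growing_cv. apply SH_growing; auto.
  exists (2 * ln (INR 0 + 2) + (1 - d) ^ 1 / d). intros x [n ->]. apply SH_bound; auto.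
Qed.

Lemma ET d E : 0 < d <= 1/64 -> Un_cv (SH d) E -> ExpectedTau d E.
Proof.
  intros Hd HE. split. apply Pge_cv; auto.
  unfold infinite_sum. change (Un_cv (sum_f_R0 (fE d)) E).
  apply CV_shift with 1%nat.
  apply Un_cv_ext with (fun N => SH d N - INR (S N) * H d (S N)).
  { intro n. rewrite Nat.add_1_r, sum_fE. reflexivity. }
  replace E with (E - 0) by ring. apply CV_minus; auto. apply tailterm_cv; auto.
Qed.

Lemma exp_le_mono x y : x <= y -> exp x <= exp y.
Proof. intros [H1|H1]. left; apply exp_increasing; auto. subst; lra. Qed.

Lemma exp_pow x n : exp x ^ n = exp (INR n * x).
Proof.
  induction n. simpl. rewrite Rmult_0_l, exp_0. reflexivity.
  rewrite S_INR. simpl pow. rewrite IHn. replace ((INR n + 1) * x) with (x + INR n * x) by ring.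
  rewrite exp_plus. reflexivity.
Qed.

Lemma nat_near x : 0 <= x -> exists K : nat, x <= INR K <= x + 1.
Proof.
  intro Hx. destruct (archimed x) as [A1 A2].
  assert (Hz: (0 < up x)%Z) by (apply lt_IZR; lra).
  exists (Z.to_nat (up x)). rewrite INR_IZR_INZ, Z2Nat.id by lia. lra.
Qed.

Lemma ln2_pos : 1/2 < ln 2.
Proof. assert (E := ln_lt_2). lra. Qed.

Lemma ln_small d : 0 < d <= 1/64 -> 6 * ln 2 <= - ln d.
Proof.
  intro Hd. assert (E : ln d <= ln (/ (2 ^ 6))) by (apply ln_le_mono; lra).
  rewrite ln_Rinv, ln_pow in E by lra. simpl INR in E. lra.
Qed.

Lemma E_lower d E : 0 < d <= 1/64 -> Un_cv (SH d) E -> - ln d / 2 <= E.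
Proof.
  intros Hd HE.
  destruct (nat_near (/ (4 * d) - 1)) as [K HK].
  { assert (/ (4 * d) >= 16). { apply Rle_ge. replace 16 with (/ (/16)) by field.
      apply Rinv_le_contravar; lra. } lra. }
  assert (HK1 : 4 * d * INR K <= 1).
  { assert (4 * d * (/ (4 * d)) = 1) by (field; lra). nra. }
  assert (S1 := SH_low d K Hd HK1).
  assert (S2 := growing_ineq _ _ (SH_growing d Hd) HE K).
  assert (L1 : ln (/ (4 * d)) <= ln (INR K + 3)).
  { apply ln_le_mono. apply Rinv_0_lt_compat; lra. lra. }
  rewrite ln_Rinv, ln_mult in L1 by lra.
  replace 4 with (2 * 2) in L1 by ring. rewrite ln_mult in L1 by lra.
  assert (S3 := ln_small d Hd). lra.
Qed.

Lemma E_upper d E : 0 < d <= 1/64 -> Un_cv (SH d) E -> E <= 5 * (- ln d).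
Proof.
  intros Hd HE.
  destruct (nat_near (/ (d * d))) as [K HK].
  { left; apply Rinv_0_lt_compat; nra. }
  assert (Hdd : / (d * d) >= 1). { apply Rle_ge. replace 1 with (/ 1) by field.
      apply Rinv_le_contravar; nra. }
  set (B := 2 * ln (INR K + 2) + (1 - d) ^ (S K) / d).
  assert (EB : E <= B).
  { apply (@Rle_cv_lim (SH d) (fun _ => B)); auto.
    intro n. apply SH_bound; auto.
    intros eps He. exists 0%nat. intros. unfold Rdist. rewrite Rminus_diag, Rabs_R0. lra. }
  assert (T1 : (1 - d) ^ (S K) / d <= 1).
  { assert (q1 : (1 - d) ^ S K <= (1 - d) ^ K).
    { simpl pow. assert (0 <= (1 - d) ^ K) by (apply pow_le; lra). nra. }
    assert (q2 : (1 - d) ^ K <= exp (- d) ^ K).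
    { apply pow_incr. split. lra. assert (E1 := exp_ineq1_le (- d)). lra. }
    rewrite exp_pow in q2.
    assert (q3 : exp (INR K * - d) <= exp (- (/ d))).
    { apply exp_le_mono. assert (INR K * d >= / d).
      { apply Rle_ge. apply Rle_trans with (/ (d * d) * d).
        right; field; lra. apply Rmult_le_compat_r; lra. } lra. }
    rewrite exp_Ropp in q3.
    assert (q4 : 1 + / d <= exp (/ d)) by apply exp_ineq1_le.
    assert (q5 : / exp (/ d) <= d).
    { assert (0 < / d) by (apply Rinv_0_lt_compat; lra).
      replace d with (/ / d) at 2 by (field; lra).
      apply Rinv_le_contravar; lra. }
    apply Rmult_le_reg_r with d. lra. unfold Rdiv. rewrite Rmult_assoc, Rinv_l by lra. lra. }
  assert (T2 : ln (INR K + 2) <= 2 * ln 2 - 2 * ln d).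
  { assert (ln (INR K + 2) <= ln (4 * / (d * d))).
    { apply ln_le_mono. assert (0 <= INR K) by apply pos_INR. lra. lra. }
    rewrite ln_mult, ln_Rinv, ln_mult in H1; try nra.
    replace 4 with (2 * 2) in H1 by ring. rewrite ln_mult in H1 by lra. lra. }
  assert (S3 := ln_small d Hd). assert (S4 := ln2_pos).
  unfold B in EB. lra.
Qed.

Lemma ln_neg d : 0 < d <= 1/64 -> Rabs (ln d) = - ln d.
Proof. intro Hd. assert (S3 := ln_small d Hd). assert (S4 := ln2_pos). rewrite Rabs_left; lra. Qed.

Theorem mainTheorem3 :
  (forall M : R, exists eta : R, 0 < eta /\
     forall delta E : R, 0 < delta < eta -> ExpectedTau delta E -> M < E) /\
  (exists c C : R, 0 < c /\ c <= C /\
     exists delta0 : R, 0 < delta0 /\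
       forall delta : R, 0 < delta < delta0 ->
         exists E : R, ExpectedTau delta E /\
           c * Rabs (ln delta) <= E /\ E <= C * Rabs (ln delta)).
Proof.
  split.
  - intro M. exists (Rmin (1/64) (exp (- (2 * Rabs M + 2)))). split.
    { apply Rmin_pos. lra. apply exp_pos. }
    intros d E [Hd1 Hd2] [_ HE].
    assert (Hd : 0 < d <= 1/64) by (split; [lra|]; eapply Rle_trans; [left; apply Hd2| apply Rmin_l]).
    destruct (E_exists d Hd) as [E0 HE0].
    assert (HE0' := ET d E0 Hd HE0). destruct HE0' as [_ HE0''].
    assert (EE := uniqueness_sum _ _ _ HE HE0''). subst E.
    assert (L := E_lower d E0 Hd HE0).
    assert (Hl : ln d < - (2 * Rabs M + 2)).
    { rewrite <- (ln_exp (- (2 * Rabs M + 2))). apply ln_increasing. lra.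
      eapply Rlt_le_trans; [apply Hd2| apply Rmin_r]. }
    assert (M <= Rabs M) by apply RRle_abs. lra.
  - exists (1/2), 5. split. lra. split. lra. exists (1/64). split. lra.
    intros d Hd'. assert (Hd : 0 < d <= 1/64) by lra.
    destruct (E_exists d Hd) as [E HE]. exists E. split. apply ET; auto.
    rewrite ln_neg by auto. split.
    + assert (L := E_lower d E Hd HE). lra.
    + apply E_upper; auto.
Qed.
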